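(* Let $\alpha>0$, $\varepsilon>0$, and let $K$ be the set of all items that are ever added to the tentative solution $I$ during Phase A and Phase B (including items that are later removed by an exchange). Then \[ \mathbb E[w(K\setminus D)]\ \ge\ (1-\varepsilon)\,\mathbb E[w(K)], \] where the expectation is over the random sampling in Phase A.
   Context: Setting. $V$ is a finite ground set of $n=|V|$ items arriving one at a time in a fixed stream order. $f:2^V\to\mathbb R_{\ge 0}$ is non-decreasing and submodular with $f(\emptyset)=0$; write $f(v\mid X)=f(X\cup\{v\})-f(X)$. $\mathcal M=\mathcal M_1\cap\dots\cap\mathcal M_p$ is the intersection of $p$ matroids $\mathcal M_1,\dots,\mathcal M_p$ on $V$ (a ''$p$-matroid''); a set is feasible if it lies in $\mathcal M$; the rank is $r=\max_{S\in\mathcal M}|S|$. $d\ge 0$ is an integer and $D\subseteq V$ is a deletion set with $|D|\le d$, fixed in advance and independent of the algorithm's random bits (static adversary). Weights. Items receive a weight $w(v)\ge 0$ when processed, as specified below; for a set $S$, $w(S)=\sum_{u\in S}w(u)$ (with $w(\emptyset)=0$). Exchange$(v,I)$: for each $j\in[p]$ with $I\cup\{v\}\notin\mathcal M_j$, let $u_j\in\arg\min\{w(u): u\in I,\ (I\cup\{v\})\setminus\{u\}\in\mathcal M_j\}$; return the set $\{u_j\}$ of these items (empty if $I\cup\{v\}\in\mathcal M$). Phase A (streaming, parameters $\varepsilon,\alpha>0$): initialize $I=\emptyset$, $C=\emptyset$. For each arriving item $v'$ of $V$ in stream order: (1) $C\gets C\cup\{v'\}$; (2) $C\gets\{v\in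 C: f(v\mid I)\ge (1+\alpha)\,w(\mathrm{Exchange}(v,I))\}$; (3) if $|C|\ge d/\varepsilon$, sample one item $v\in C$ at random with probability proportional to $1/f(v\mid I)$, set $w(v)=f(v\mid I)$, and set $I\gets (I\cup\{v\})\setminus \mathrm{Exchange}(v,I)$. At the end output $S_1:=I$ and the buffer $C$. The coreset is $R=S_1\cup C$. Phase B (after deletions, parameter $\alpha$): start with $I=S_1$. For each $v\in C\setminus D$: set $w(v)=f(v\mid I)$, $S=\mathrm{Exchange}(v,I)$, and if $w(v)\ge(1+\alpha)w(S)$ set $I\gets(I\cup\{v\})\setminus S$. Let $S_2$ be the final $I$; output $\mathrm{ALG}=S_2\setminus D$. *)

(* Defs.v *)
From HB Require Import structures.
From mathcomp Require Import all_boot all_order all_algebra.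
Set Implicit Arguments. Unset Strict Implicit. Unset Printing Implicit Defensive.
Import Order.TTheory GRing.Theory Num.Theory.
Local Open Scope ring_scope.

Section Defs.
Variables (R : realFieldType) (T : finType).

Definition marg (f : {set T} -> R) (v : T) (X : {set T}) : R := f (v |: X) - f X.

Definition nonneg_fun (f : {set T} -> R) := forall A, 0 <= f A.
Definition monotone_fun (f : {set T} -> R) :=
  forall A B : {set T}, A \subset B -> f A <= f B.
Definition submodular_fun (f : {set T} -> R) :=
  forall (X Y : {set T}) (v : T), X \subset Y -> v \notin Y -> marg f v Y <= marg f v X.

Definition is_matroid (Ind : {set T} -> bool) : Prop :=
  [/\ Ind set0,
      (forall A B : {set T}, A \subset B -> Ind B -> Ind A) &
      (forall A B : {set T}, Ind A -> Ind B -> (#|A| < #|B|)%N ->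
          exists2 x, x \in B :\: A & Ind (x |: A))].

Definition wsum (w : T -> R) (S : {set T}) : R := \sum_(u in S) w u.

Definition wupd (w : T -> R) (v : T) (a : R) : T -> R :=
  fun x => if x == v then a else w x.

Definition exch_cands (Ind : {set T} -> bool) (v : T) (I : {set T}) : {set T} :=
  [set u in I | Ind ((v |: I) :\ u)].
Definition argmin_set (w : T -> R) (A : {set T}) : {set T} :=
  [set u in A | [forall u' in A, w u <= w u']].

Variables (f : {set T} -> R) (p : nat) (M : 'I_p -> {set T} -> bool)
          (tb : {set T} -> T) (alpha eps : R) (d : nat).

(** Exchange(v, I); ties in the argmin are broken by the rule [tb] *)
Definition Exchange (w : T -> R) (v : T) (I : {set T}) : {set T} :=
  [set tb (argmin_set w (exch_cands (M j) v I)) | j : 'I_p & ~~ M j (v |: I)].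

(** algorithm state: tentative solution I, buffer C, weights w,
    and K = all items ever added to I *)
Record state := State { sI : {set T}; sC : {set T}; sw : T -> R; sK : {set T} }.

Definition init_state : state := State set0 set0 (fun _ => 0) set0.

(** sampling probability of v in C, proportional to 1/f(v|I)
    (limit convention: if some items have zero marginal, uniform among them) *)
Definition samp_prob (I C : {set T}) (v : T) : R :=
  let Z := [set u in C | marg f u I == 0] in
  if Z != set0 then (if v \in Z then (#|Z|%:R)^-1 else 0)
  else (marg f v I)^-1 / \sum_(u in C) (marg f u I)^-1.

Definition filterC (v' : T) (st : state) : state :=
  State (sI st)
        [set v in v' |: sC st |
          (1 + alpha) * wsum (sw st) (Exchange (sw st) v (sI st)) <= marg f v (sI st)]
        (sw st) (sK st).

Definition addA (st : state) (v : T) : state :=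
  let w' := wupd (sw st) v (marg f v (sI st)) in
  State ((v |: sI st) :\: Exchange w' v (sI st)) (sC st :\ v) w' (v |: sK st).

(** Phase A as a finite probability distribution (list of (probability, outcome)) *)
Fixpoint phaseA (s : seq T) (st : state) : seq (R * state) :=
  match s with
  | [::] => [:: (1, st)]
  | v' :: s' =>
      let st1 := filterC v' st in
      if (sC st1 != set0) && (d%:R / eps <= #|sC st1|%:R) then
        flatten [seq [seq (samp_prob (sI st1) (sC st1) v * q.1, q.2)
                     | q <- phaseA s' (addA st1 v)] | v <- enum (sC st1)]
      else phaseA s' st1
  end.

Definition stepB (st : state) (v : T) : state :=
  let w' := wupd (sw st) v (marg f v (sI st)) in
  let S := Exchange w' v (sI st) in
  if (1 + alpha) * wsum w' S <= w' v
  then State ((v |: sI st) :\: S) (sC st) w' (v |: sK st)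
  else State (sI st) (sC st) w' (sK st).

Definition phaseB (s : seq T) (D : {set T}) (st : state) : state :=
  foldl stepB st [seq v <- s | v \in sC st :\: D].

End Defs.

Definition expect (R : realFieldType) (A : Type) (mu : seq (R * A)) (g : A -> R) : R :=
  \sum_(q <- mu) q.1 * g q.2.

(* Main.v *)
Require Import Defs.
From HB Require Import structures.
From mathcomp Require Import all_boot all_order all_algebra.
From mathcomp Require Import ring lra.
Import Order.TTheory GRing.Theory Num.Theory.
Local Open Scope ring_scope.

Section Proof4.
Variables (R : realFieldType) (T : finType) (f : {set T} -> R) (p : nat)
  (M : 'I_p -> {set T} -> bool) (tb : {set T} -> T) (d : nat) (D : {set T})
  (eps alpha : R).
Hypothesis fmono : monotone_fun f.
Hypothesis Dd : (#|D| <= d)%N.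
Hypothesis eps0 : 0 < eps.

Lemma marg_ge0 v X : 0 <= marg f v X.
Proof. rewrite /marg subr_ge0; apply: fmono; exact: subsetUr. Qed.

Definition aD (st : state R T) := wsum (sw st) (sK st :&: D).
Definition bK (st : state R T) := wsum (sw st) (sK st).

Definition InvA (s : seq T) (st : state R T) :=
  [/\ [disjoint sK st & sC st],
      (forall x, x \in s -> (x \notin sK st) && (x \notin sC st)) &
      (forall x, 0 <= sw st x)].

Lemma expect_flatten (es : seq T) (P : T -> R) (L : T -> seq (R * state R T))
   (g : state R T -> R) :
  expect (flatten [seq [seq (P v * q.1, q.2) | q <- L v] | v <- es]) g =
  \sum_(v <- es) P v * expect (L v) g.
Proof.
rewrite /expect big_flatten /= big_map; apply: eq_bigr => v _.
rewrite big_map mulr_sumr; apply: eq_bigr => q _ /=; by rewrite mulrA.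
Qed.

Lemma sampling_ineq (I C : {set T}) : C != set0 -> d%:R / eps <= #|C|%:R ->
  (\sum_(v in C) samp_prob f I C v = 1) /\
  0 <= \sum_(v in C) samp_prob f I C v * ((eps - (v \in D)%:R) * marg f v I).
Proof.
move=> C0 HC.
set Z := [set u in C | marg f u I == 0].
have E : forall v, samp_prob f I C v = if Z != set0 then (if v \in Z then (#|Z|%:R)^-1 else 0)
  else (marg f v I)^-1 / \sum_(u in C) (marg f u I)^-1 by [].
case: (boolP (Z != set0)) => HZ.
- split.
  + rewrite (eq_bigr (fun v => if v \in Z then (#|Z|%:R)^-1 else 0)); last first.
      by move=> v _; rewrite E HZ.
    rewrite -big_mkcondr /=.
    rewrite (eq_bigl (fun i => i \in Z)); last first.
      by move=> i; rewrite /Z inE; case: (i \in C).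
    rewrite sumr_const -[_ *+ #|Z|]mulr_natr mulVf // pnatr_eq0 -lt0n card_gt0 //.
  + rewrite big1 // => v _; rewrite E HZ.
    case: ifP => Hv; last by rewrite mul0r.
    move: Hv; rewrite /Z inE => /andP [_ /eqP ->]; by rewrite !mulr0.
- have Hpos : forall v, v \in C -> 0 < marg f v I.
    move=> v vC; rewrite lt_neqAle marg_ge0 andbT eq_sym.
    apply/negP => /eqP H0; move: HZ; rewrite negbK => /eqP/setP/(_ v).
    by rewrite /Z !inE vC H0 eqxx.
  set S := \sum_(u in C) (marg f u I)^-1.
  have S0 : 0 < S.
    case/set0Pn: C0 => x xC.
    rewrite /S (bigD1 x) //=; apply: ltr_pwDl; first by rewrite invr_gt0 Hpos.
    by apply: sumr_ge0 => i /andP [iC _]; rewrite invr_ge0 ltW // Hpos.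
  split.
  + rewrite (eq_bigr (fun v => (marg f v I)^-1 / S)); last by move=> v _; rewrite E (negbTE HZ).
    by rewrite -mulr_suml -/S divff // gt_eqF.
  + rewrite (eq_bigr (fun v => (eps - (v \in D)%:R) / S)); last first.
      move=> v vC; rewrite E (negbTE HZ) -/S.
      have := Hpos v vC => hp; field; by rewrite gt_eqF // gt_eqF.
    rewrite -mulr_suml; apply: divr_ge0; last exact: ltW.
    rewrite sumrB sumr_const subr_ge0.
    have -> : \sum_(i in C) ((i \in D)%:R : R) = \sum_(i in C | i \in D) (1 : R).
      rewrite big_mkcondr /=; apply: eq_bigr => i _; by case: (i \in D).
    rewrite (eq_bigl (fun i => i \in C :&: D)); last by move=> i; rewrite inE.
    rewrite sumr_const.
    have h1 : (#|C :&: D| <= d)%N by apply: leq_trans Dd; apply: subset_leq_card; exact: subsetIr.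
    apply: (@le_trans _ _ (d%:R)).
      by rewrite -[X in X <= _]mulr_natr mul1r ler_nat.
    rewrite -[_ *+ #|C|]mulr_natr mulrC -ler_pdivrMr //.
Qed.

Lemma wupd_eq (w : T -> R) v a : wupd w v a v = a.
Proof. by rewrite /wupd eqxx. Qed.
Lemma wupd_neq (w : T -> R) v a x : x != v -> wupd w v a x = w x.
Proof. by move=> h; rewrite /wupd (negbTE h). Qed.

Lemma wsum_upd_out (w : T -> R) v a (X : {set T}) : v \notin X ->
  wsum (wupd w v a) X = wsum w X.
Proof.
move=> vX; apply: eq_bigr => x xX; apply: wupd_neq.
by apply/eqP => e; move: vX; rewrite -e xX.
Qed.

Lemma filterC_inv v' s st : uniq (v' :: s) -> InvA (v' :: s) st ->
  InvA s (filterC f M tb alpha v' st).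
Proof.
move=> /andP [v's _] [Hdis Hs Hw]; split => //=.
- rewrite -setI_eq0; apply/eqP/setP => x; rewrite !inE.
  apply/negP => /and3P [xK /orP [/eqP xv | xC] _].
    by move: (Hs v'); rewrite inE eqxx /= -xv xK => /(_ isT).
  by move: Hdis; rewrite -setI_eq0 => /eqP/setP/(_ x); rewrite !inE xK xC.
- move=> x xs; have := Hs x; rewrite inE xs orbT => /(_ isT) /andP [-> xC] /=.
  rewrite !inE negb_and; apply/orP; left; rewrite negb_or xC andbT.
  by apply/eqP => e; move: v's; rewrite -e xs.
Qed.

Lemma addA_inv s st v : InvA s st -> v \in sC st -> InvA s (Defs.addA f M tb st v).
Proof.
move=> [Hdis Hs Hw] vC; split => /=.
- rewrite -setI_eq0; apply/eqP/setP => x; rewrite !inE.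
  apply/negP => /and3P [/orP [/eqP xv | xK] xv' xC]; first by rewrite xv eqxx in xv'.
  by move: Hdis; rewrite -setI_eq0 => /eqP/setP/(_ x); rewrite !inE xK xC.
- move=> x xs; have := Hs x xs => /andP [xK xC].
  have xv : x != v by apply/eqP => e; move: xC; rewrite e vC.
  by rewrite !inE negb_or xv xK xC.
- move=> x; rewrite /wupd; case: ifP => _ //; exact: marg_ge0.
Qed.

Lemma addA_val s st v : InvA s st -> v \in sC st ->
  eps * bK (Defs.addA f M tb st v) - aD (Defs.addA f M tb st v) =
  eps * bK st - aD st + (eps - (v \in D)%:R) * marg f v (sI st).
Proof.
move=> [Hdis Hs Hw] vC.
have vK : v \notin sK st.
  by apply/negP => vK; move: Hdis; rewrite -setI_eq0 => /eqP/setP/(_ v); rewrite !inE vK vC.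
rewrite /bK /aD /= {1}/wsum big_setU1 //= -/(wsum _ _) wupd_eq wsum_upd_out //.
have vKD : v \notin sK st :&: D by rewrite inE (negbTE vK).
case vD: (v \in D).
- have -> : (v |: sK st) :&: D = v |: (sK st :&: D).
    by apply/setP => x; rewrite !inE; case: eqP => // ->; rewrite vD.
  rewrite /wsum big_setU1 //= -!/(wsum _ _) wupd_eq wsum_upd_out //. ring.
- have -> : (v |: sK st) :&: D = sK st :&: D.
    apply/setP => x; rewrite !inE; have [->|] := eqVneq x v; [by rewrite vD !andbF | by []].
  rewrite wsum_upd_out // subr0. ring.
Qed.

Lemma samp_prob_ge0 I C v : 0 <= samp_prob f I C v.
Proof.
rewrite /samp_prob /=; case: ifP => _.
  by case: ifP => _ //; rewrite invr_ge0 ler0n.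
apply: divr_ge0; first by rewrite invr_ge0 marg_ge0.
by apply: sumr_ge0 => i _; rewrite invr_ge0 marg_ge0.
Qed.

Lemma phaseA_bound (F : state R T -> R) :
  (forall st, InvA [::] st -> eps * bK st - aD st <= F st) ->
  forall s st, uniq s -> InvA s st ->
  eps * bK st - aD st <= expect (phaseA f M tb alpha eps d s st) F.
Proof.
move=> HF; elim=> [|v' s IH] st Hu Hinv /=.
  by rewrite /expect big_cons big_nil mul1r addr0; exact: HF.
have Hinv1 := filterC_inv _ _ _ Hu Hinv.
have us : uniq s by case/andP: Hu.
set st1 := filterC f M tb alpha v' st in Hinv1 *.
have -> : eps * bK st - aD st = eps * bK st1 - aD st1 by [].
case: ifP => Hc; last exact: IH.
case/andP: Hc => C0 HC.
rewrite expect_flatten big_enum /=.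
have [S1 S2] := sampling_ineq (sI st1) (sC st1) C0 HC.
apply: (@le_trans _ _ (\sum_(v in sC st1) samp_prob f (sI st1) (sC st1) v *
    (eps * bK st1 - aD st1 + (eps - (v \in D)%:R) * marg f v (sI st1)))).
  rewrite (eq_bigr (fun v => samp_prob f (sI st1) (sC st1) v * (eps * bK st1 - aD st1) +
     samp_prob f (sI st1) (sC st1) v * ((eps - (v \in D)%:R) * marg f v (sI st1)))); last first.
    by move=> v _; rewrite mulrDr.
  rewrite big_split /= -mulr_suml S1 mul1r lerDl //.
apply: ler_sum => v vC; apply: ler_wpM2l.
  exact: samp_prob_ge0.
rewrite -(addA_val _ _ _ Hinv1 vC); apply: IH => //; exact: addA_inv.
Qed.


Lemma stepB_facts st v :
  [/\ sw (stepB f M tb alpha st v) = wupd (sw st) v (marg f v (sI st)),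
      sK st \subset sK (stepB f M tb alpha st v) &
      sK (stepB f M tb alpha st v) \subset v |: sK st].
Proof.
rewrite /stepB; case: ifP => _ /=; split => //; by [exact: subsetUr | exact: subxx].
Qed.

Lemma foldB l st :
  let st' := foldl (stepB f M tb alpha) st l in
  [/\ forall x, x \notin l -> sw st' x = sw st x,
     sK st \subset sK st',
     forall x, x \in sK st' -> (x \in sK st) || (x \in l) &
     ((forall x, 0 <= sw st x) -> forall x, 0 <= sw st' x)].
Proof.
elim: l st => [|v l IH] st /=.
  by split => // x ->.
have [Hw HK1 HK2] := stepB_facts st v.
have [I1 I2 I3 I4] := IH (stepB f M tb alpha st v).
split.
- move=> x; rewrite inE negb_or => /andP [xv xl]; rewrite I1 // Hw wupd_neq //.
- exact: subset_trans HK1 I2.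
- move=> x /I3 /orP [/(subsetP HK2) | xl]; last by rewrite inE xl !orbT.
  by rewrite !inE => /orP [-> | ->]; rewrite ?orbT.
- move=> H0; apply: I4 => x; rewrite Hw /wupd; case: ifP => _ //; exact: marg_ge0.
Qed.


Lemma final_bound s st st' : InvA [::] st ->
  st' = phaseB f M tb alpha s D st ->
  eps * bK st - aD st <=
  eps * wsum (sw st') (sK st') - (wsum (sw st') (sK st') - wsum (sw st') (sK st' :\: D)).
Proof.
move=> [Hdis _ Hw] ->.
rewrite /phaseB.
set l := [seq v <- s | v \in sC st :\: D].
have [I1 I2 I3 I4] := foldB l st.
set st2 := foldl _ st l in I1 I2 I3 I4 *.
have lD : forall x, x \in l -> (x \in sC st) && (x \notin D).
  by move=> x; rewrite mem_filter !inE => /andP [/andP [-> ->] _].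
have Ha : wsum (sw st2) (sK st2) - wsum (sw st2) (sK st2 :\: D) = aD st.
  rewrite {1}/wsum (big_setID D) /= -!/(wsum _ _) addrK.
  have -> : sK st2 :&: D = sK st :&: D.
    apply/setP => x; rewrite !inE; apply/andP/andP => [[xK xD] | [xK xD]]; split => //.
      case/orP: (I3 x xK) => // /lD; by rewrite xD andbF.
    exact: (subsetP I2).
  apply: eq_bigr => x; rewrite inE => /andP [_ xD]; apply: I1.
  by apply/negP => /lD; rewrite xD andbF.
rewrite Ha lerD2r; apply: ler_wpM2l; first exact: ltW.
rewrite /bK {2}/wsum (big_setID (sK st)) /= -!/(wsum _ _).
have -> : sK st2 :&: sK st = sK st by apply/setIidPr.
rewrite -[X in X <= _]addr0; apply: lerD.
  rewrite le_eqVlt; apply/orP; left; apply/eqP; apply: eq_bigr => x xK; symmetry; apply: I1.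
  apply/negP => /lD /andP [xC _].
  by move: Hdis; rewrite -setI_eq0 => /eqP/setP/(_ x); rewrite !inE xK xC.
by apply: sumr_ge0 => x _; exact: I4.
Qed.

End Proof4.

Theorem mainTheorem4 (R : realFieldType) (T : finType) (s : seq T)
    (f : {set T} -> R) (p : nat) (M : 'I_p -> {set T} -> bool)
    (tb : {set T} -> T) (d : nat) (D : {set T}) (eps alpha : R) :
  uniq s -> (forall v : T, v \in s) ->
  f set0 = 0 -> nonneg_fun f -> monotone_fun f -> submodular_fun f ->
  (0 < p)%N -> (forall j : 'I_p, is_matroid (M j)) ->
  (forall A : {set T}, A != set0 -> tb A \in A) ->
  (#|D| <= d)%N -> 0 < eps -> 0 < alpha ->
  let out := phaseA f M tb alpha eps d s (init_state R T) in
  let final := fun st => phaseB f M tb alpha s D st in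
  (1 - eps) * expect out (fun st => wsum (sw (final st)) (sK (final st)))
  <= expect out (fun st => wsum (sw (final st)) (sK (final st) :\: D)).
Proof.
move=> us sall f0 fnn fmono fsub p0 Mm tbH Dd eps0 alpha0; cbv zeta.
set out := phaseA _ _ _ _ _ _ _ _.
set G := fun st => wsum (sw (phaseB f M tb alpha s D st)) (sK (phaseB f M tb alpha s D st)).
set H := fun st => wsum (sw (phaseB f M tb alpha s D st)) (sK (phaseB f M tb alpha s D st) :\: D).
have Hinit : InvA R T s (init_state R T).
  split => /=; last by [].
    by rewrite -setI_eq0 set0I.
  by move=> x _; rewrite !inE.
have Hb := @phaseA_bound R T f p M tb d D eps alpha fmono Dd eps0
  (fun st => eps * G st - (G st - H st))
  (fun st Hst => @final_bound R T f p M tb D eps alpha fmono eps0 s st _ Hst erefl)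
  s (init_state R T) us Hinit.
have E0 : eps * bK R T (init_state R T) - aD R T D (init_state R T) = 0.
  by rewrite /bK /aD /= set0I /wsum !big_set0 mulr0 subr0.
move: Hb; rewrite E0 -/out /expect => Hb.
rewrite -subr_ge0 mulr_sumr -sumrB.
suff -> : \sum_(i <- out) (i.1 * H i.2 - (1 - eps) * (i.1 * G i.2)) =
  \sum_(i <- out) i.1 * (eps * G i.2 - (G i.2 - H i.2)) by [].
apply: eq_bigr => i _; ring.
Qed.
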